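(* In the setting where $K$ is the Erdős–Rényi random graph on ${\cal V}=\{1,\ldots,n\}$ ($n\ge2$) with edge probability $p\in(0,1)$, $Y$ its number of isolated vertices, $V$ uniform on ${\cal V}$ independent of $K$, $K^s$ obtained from $K$ by deleting all edges incident to $V$, and $Y^s$ the number of isolated vertices of $K^s$, for every $\theta\ge 0$, $$E\big(e^{\theta Y^s}-e^{\theta Y}\big)\le \frac{\theta\gamma_\theta}{2}\,E\big(e^{\theta Y}\big),\qquad \gamma_\theta=e^\theta(pe^\theta+1-p)^{n-2}(npe^\theta+1-p)+(n-1)p+1,$$ and consequently $\frac{d}{d\theta}E(e^{\theta Y})\le \mu\big(1+\tfrac{\theta\gamma_\theta}{2}\big)E(e^{\theta Y})$ for $\theta\ge0$, where $\mu=EY$. Moreover, for every $\theta<0$, $E(e^{\theta Y}-e^{\theta Y^s})\le 2|\theta|E(e^{\theta Y})$ and $\frac{d}{d\theta}E(e^{\theta Y})\ge \mu(1+2\theta)E(e^{\theta Y})$.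
   Context: The Erdős–Rényi random graph on ${\cal V}$ with edge probability $p$ has independent Bernoulli($p$) edge indicators for all unordered pairs of distinct vertices; an isolated vertex is one of degree $0$. *)

(* Defs.v *)
From Stdlib Require Import Reals.
From mathcomp Require Import all_boot.
Set Implicit Arguments. Unset Strict Implicit. Unset Printing Implicit Defensive.

(* Unordered pairs {i,j} of distinct vertices of 'I_n, represented as (i,j) with i < j. *)
Definition upair (n : nat) := {x : 'I_n * 'I_n | (x.1 < x.2)%N}.

Definition graph (n : nat) := {ffun upair n -> bool}.

Definition adj (n : nat) (g : graph n) (i j : 'I_n) : bool :=
  [exists e : upair n, ((val e == (i, j)) || (val e == (j, i))) && g e].

Definition isolated (n : nat) (g : graph n) (i : 'I_n) : bool :=
  [forall j : 'I_n, ~~ adj g i j].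

Definition nisol (n : nat) (g : graph n) : nat := #|[set i | isolated g i]|.

Definition delete_at (n : nat) (g : graph n) (v : 'I_n) : graph n :=
  [ffun e : upair n => [&& g e, (val e).1 != v & (val e).2 != v]].

Open Scope R_scope.

Definition er_prob (n : nat) (p : R) (g : graph n) : R :=
  \big[Rmult/1]_(e : upair n) (if g e then p else 1 - p).

Definition ER_E (n : nat) (p : R) (f : graph n -> R) : R :=
  \big[Rplus/0]_(g : graph n) (er_prob p g * f g).

Definition ER_EV (n : nat) (p : R) (f : graph n -> 'I_n -> R) : R :=
  \big[Rplus/0]_(v : 'I_n) \big[Rplus/0]_(g : graph n) (/ INR n * er_prob p g * f g v).

Definition mgfY (n : nat) (p : R) (theta : R) : R :=
  ER_E p (fun g : graph n => exp (theta * INR (nisol g))).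

Definition gamma_theta (n : nat) (p theta : R) : R :=
  exp theta * (p * exp theta + 1 - p) ^ (n - 2)
    * (INR n * p * exp theta + 1 - p) + INR (n - 1) * p + 1.

(* Main.v *)
Require Import Defs.
From Stdlib Require Import Reals Lra Lia.
From HB Require Import structures.
From mathcomp Require Import all_boot zify.
Set Implicit Arguments. Unset Strict Implicit. Unset Printing Implicit Defensive.
Open Scope R_scope.

Lemma Rplus_0l' : left_id 0 Rplus. Proof. move=> x; lra. Qed.
Lemma RpA : associative Rplus. Proof. move=> x y z; lra. Qed.
Lemma RmA : associative Rmult. Proof. move=> x y z; ring. Qed.
Lemma Rmult_1l' : left_id 1 Rmult. Proof. move=> x; lra. Qed.
HB.instance Definition _ := Monoid.isComLaw.Build R 0 Rplus RpA Rplus_comm Rplus_0l'.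
HB.instance Definition _ := Monoid.isComLaw.Build R 1 Rmult RmA Rmult_comm Rmult_1l'.
Lemma Rmult_0l' : left_zero 0 Rmult. Proof. move=> x; lra. Qed.
Lemma Rmult_0r' : right_zero 0 Rmult. Proof. move=> x; lra. Qed.
HB.instance Definition _ := Monoid.isMulLaw.Build R 0 Rmult Rmult_0l' Rmult_0r'.
Lemma RDl : left_distributive Rmult Rplus. Proof. move=> x y z; lra. Qed.
Lemma RDr : right_distributive Rmult Rplus. Proof. move=> x y z; lra. Qed.
HB.instance Definition _ := Monoid.isAddLaw.Build R Rmult Rplus RDl RDr.


Definition inc n (v : 'I_n) (e : upair n) : bool := ((val e).1 == v) || ((val e).2 == v).
Definition other n (v : 'I_n) (e : upair n) : 'I_n :=
  if (val e).1 == v then (val e).2 else (val e).1.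
Definition mix n (v : 'I_n) (g h : graph n) : graph n :=
  [ffun e => if inc v e then h e else g e].
Definition w (p : R) (b : bool) : R := if b then p else 1 - p.

Lemma isolatedE n (g : graph n) i : isolated g i = [forall e, inc i e ==> ~~ g e].
Proof.
apply/forallP/forallP.
- move=> H e; apply/implyP => Hi; apply/negP => ge.
  apply: (negP (H (other i e))); apply/existsP; exists e; rewrite ge andbT.
  move: Hi; rewrite /inc /other; case: e {ge} => [[a b] hab] /=.
  case: eqP => [-> _|_ /eqP ->]; by rewrite eqxx ?orbT.
- move=> H j; apply/negP => /existsP [e /andP[/orP[E|E] ge]];
  have := H e; by rewrite /inc (eqP E) /= eqxx ?orbT ge.
Qed.

Lemma deleteE n (g : graph n) v e : delete_at g v e = g e && ~~ inc v e.
Proof. by rewrite ffunE /inc negb_or. Qed.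

Lemma mix_isol n (v : 'I_n) (g h : graph n) : isolated (mix v g h) v = [forall e, inc v e ==> ~~ h e].
Proof.
rewrite isolatedE; apply: eq_forallb => e; rewrite ffunE.
by case: (inc v e).
Qed.

Lemma mix_del n (v : 'I_n) (g h : graph n) : [forall e, inc v e ==> ~~ h e] -> mix v g h = delete_at g v.
Proof.
move=> /forallP H; apply/ffunP => e; rewrite ffunE deleteE.
have := H e; case: (inc v e) => /=; last by rewrite andbT.
by move/negbTE ->; rewrite andbF.
Qed.

Lemma del_mix n (v : 'I_n) (g h : graph n) : delete_at (mix v g h) v = delete_at g v.
Proof. by apply/ffunP => e; rewrite !deleteE ffunE; case: (inc v e); rewrite ?andbF. Qed.

Lemma erE n p (g : graph n) : er_prob p g = \big[Rmult/1]_(e : upair n) w p (g e).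
Proof. by []. Qed.

Lemma Rsum_le (I : finType) (F G : I -> R) :
  (forall i, F i <= G i) -> \big[Rplus/0]_(i : I) F i <= \big[Rplus/0]_(i : I) G i.
Proof.
move=> H; apply: (big_ind2 (fun x y => x <= y)) => //; first lra.
by move=> *; lra.
Qed.

Lemma Rprod_ge0 (I : finType) (F : I -> R) :
  (forall i, 0 <= F i) -> 0 <= \big[Rmult/1]_(i : I) F i.
Proof.
move=> H; apply: (big_ind (fun x => 0 <= x)) => //; first lra.
by move=> *; apply: Rmult_le_pos.
Qed.

Lemma Rsum_ge0 (I : finType) (F : I -> R) :
  (forall i, 0 <= F i) -> 0 <= \big[Rplus/0]_(i : I) F i.
Proof.
move=> H; apply: (big_ind (fun x => 0 <= x)) => //; first lra.
by move=> *; lra.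
Qed.

Lemma er_prod n p (psi : upair n -> bool -> R) :
  \big[Rplus/0]_(h : graph n) (er_prob p h * \big[Rmult/1]_e psi e (h e))
  = \big[Rmult/1]_(e : upair n) (p * psi e true + (1 - p) * psi e false).
Proof.
transitivity (\big[Rmult/1]_(e : upair n) \big[Rplus/0]_(b : bool) (w p b * psi e b)).
  rewrite bigA_distr_bigA; apply: eq_bigr => h _.
  by rewrite erE -big_split.
by apply: eq_bigr => e _; rewrite big_bool.
Qed.

Lemma er_total n p : \big[Rplus/0]_(h : graph n) er_prob p h = 1.
Proof.
transitivity (\big[Rplus/0]_(h : graph n) (er_prob p h * \big[Rmult/1]_(e : upair n) (fun _ _ => 1) e (h e))).
  apply: eq_bigr => h _; rewrite big1 //; lra.
rewrite (er_prod p (fun _ _ => 1)) big1 // => e _; lra.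
Qed.

Lemma er_ge0 n p (g : graph n) : 0 <= p <= 1 -> 0 <= er_prob p g.
Proof. move=> Hp; apply: Rprod_ge0 => e; rewrite /w; case: (g e); lra. Qed.

Lemma P_mix n p (v : 'I_n) (a b : graph n) :
  er_prob p (mix v a b) * er_prob p (mix v b a) = er_prob p a * er_prob p b.
Proof.
rewrite !erE -!big_split; apply: eq_bigr => e _; rewrite !ffunE.
case: (inc v e) => //; apply: Rmult_comm.
Qed.

Lemma mixK n (v : 'I_n) (a b : graph n) : mix v (mix v a b) (mix v b a) = a.
Proof. by apply/ffunP => e; rewrite !ffunE; case: (inc v e). Qed.

Lemma resample n p (v : 'I_n) (F : graph n -> R) :
  \big[Rplus/0]_(g : graph n) (er_prob p g * F g) =
  \big[Rplus/0]_(g : graph n) (er_prob p g *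
      \big[Rplus/0]_(h : graph n) (er_prob p h * F (mix v g h))).
Proof.
have -> : \big[Rplus/0]_(g : graph n) (er_prob p g * F g) =
  \big[Rplus/0]_(g : graph n) \big[Rplus/0]_(h : graph n) (er_prob p g * (er_prob p h * F g)).
  apply: eq_bigr => g _; rewrite -big_distrr -big_distrl er_total /=; lra.
under [RHS]eq_bigr do rewrite big_distrr.
rewrite !pair_big /=.
pose s := fun x : graph n * graph n => (mix v x.1 x.2, mix v x.2 x.1).
have sK : involutive s by move=> [a b]; rewrite /s /= !mixK.
rewrite (reindex_inj (inv_inj sK)) /=; apply: eq_bigr => [[a b]] _ /=.
have := P_mix p v a b; move=> E.
rewrite -!Rmult_assoc E; ring.
Qed.

Lemma Rsum_distrr (I : finType) (a : R) (F : I -> R) :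
  a * \big[Rplus/0]_(i : I) F i = \big[Rplus/0]_(i : I) (a * F i).
Proof. by rewrite big_distrr. Qed.
Lemma Rsum_distrl (I : finType) (a : R) (F : I -> R) :
  (\big[Rplus/0]_(i : I) F i) * a = \big[Rplus/0]_(i : I) (F i * a).
Proof. by rewrite big_distrl. Qed.
Close Scope R_scope.

Lemma ord_neq n (a b : 'I_n) : (a < b)%N -> a != b.
Proof. by move=> h; apply/eqP => E; move: h; rewrite E ltnn. Qed.

Lemma other_neq n (v : 'I_n) e : inc v e -> other v e != v.
Proof.
case: e => [[a b] hab]; rewrite /inc /other /=.
move: hab => /= hab.
case: (eqVneq a v) => [E|na] /=; last done.
by subst; rewrite eq_sym ord_neq.
Qed.

Lemma inc_other n (v : 'I_n) e : inc v e -> inc (other v e) e.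
Proof.
case: e => [[a b] hab]; rewrite /inc /other /=.
by case: (eqVneq a v) => [E|na] /=; rewrite ?E eqxx ?orbT.
Qed.

Lemma other_uniq n (v u : 'I_n) e : inc v e -> inc u e -> u != v -> other v e = u.
Proof.
case: e => [[a b] hab]; rewrite /inc /other /=.
case: (eqVneq a v) => [E|na] /=.
  subst a => _ /orP [/eqP E|/eqP E] uv; last done.
  by move: uv; rewrite E eqxx.
move=> /eqP -> /orP [/eqP->|/eqP->] //; by rewrite eqxx.
Qed.

Lemma other_inj n (v : 'I_n) e1 e2 : inc v e1 -> inc v e2 -> other v e1 = other v e2 -> e1 = e2.
Proof.
move=> h1 h2 E; apply: val_inj.
case: e1 h1 E => [[a b] hab]; case: e2 h2 => [[c d] hcd]; rewrite /inc /other /=.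
move: hab hcd => /= hab hcd.
case: (eqVneq a v) => [Ea|na]; case: (eqVneq c v) => [Ec|nc] //=; subst.
- by move=> _ _ ->.
- move=> /eqP Ed _ E; subst; move: hab hcd; lia.
- move=> _ /eqP Eb E; subst; move: hab hcd; lia.
- by move=> /eqP -> /eqP -> ->.
Qed.

Lemma other_surj n (v u : 'I_n) : u != v -> exists e, inc v e && (other v e == u).
Proof.
move=> uv; case: (ltngtP u v) => [h|h|E]; last by move: uv; rewrite (val_inj E) eqxx.
- exists (exist _ (u, v) h : upair n); rewrite /inc /other /= eqxx orbT.
  by rewrite (negbTE uv) eqxx.
- exists (exist _ (v, u) h : upair n); by rewrite /inc /other /= !eqxx.
Qed.

Definition incs n (v : 'I_n) : {set upair n} := [set e | inc v e].

Lemma card_incs n (v : 'I_n) : #|incs v| = (n - 1)%N.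
Proof.
have -> : #|incs v| = #|other v @: incs v|.
  by rewrite card_in_imset // => e1 e2; rewrite !inE; apply: other_inj.
have -> : other v @: incs v = [set~ v].
  apply/setP => u; rewrite !inE; apply/imsetP/idP.
    by move=> [e]; rewrite inE => he ->; apply: other_neq.
  move=> /other_surj [e /andP [he /eqP <-]]; by exists e; rewrite ?inE.
by rewrite cardsC1 card_ord subn1.
Qed.
Open Scope R_scope.

Lemma prod_ind (I : finType) (Q : pred I) :
  (if [forall i, Q i] then 1 else 0) = \big[Rmult/1]_(i : I) (if Q i then 1 else 0).
Proof.
case: (boolP [forall i, Q i]) => [/forallP H|/forallPn [i Hi]].
  by rewrite big1 // => i _; rewrite H.
rewrite (bigD1 i) //= (negbTE Hi); lra.
Qed.

Lemma prod_cond (I : finType) (A : pred I) a :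
  \big[Rmult/1]_(i : I) (if A i then a else 1) = a ^ #|A|.
Proof.
rewrite -big_mkcond big_const; elim: #|A| => //= k ->; lra.
Qed.

Lemma INR_sum (I : finType) (f : I -> nat) :
  INR (\sum_(i : I) f i)%N = \big[Rplus/0]_(i : I) INR (f i).
Proof. exact: (big_morph INR plus_INR (erefl (INR 0))). Qed.

Lemma nisolE n (g : graph n) :
  INR (nisol g) = \big[Rplus/0]_(v : 'I_n) (if isolated g v then 1 else 0).
Proof.
rewrite /nisol -sum1dep_card big_mkcond /= INR_sum; apply: eq_bigr => v _.
by case: (isolated g v).
Qed.

Lemma sb_v n p (v : 'I_n) (F : graph n -> R) :
  \big[Rplus/0]_(g : graph n) (er_prob p g * (if isolated g v then F g else 0)) =
  (1 - p) ^ (n - 1) * \big[Rplus/0]_(g : graph n) (er_prob p g * F (delete_at g v)).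
Proof.
rewrite (resample p v) Rsum_distrr; apply: eq_bigr => g _ /=.
transitivity (er_prob p g * (F (delete_at g v) *
  \big[Rplus/0]_(h : graph n) (er_prob p h *
    \big[Rmult/1]_(e : upair n) (fun e b => if inc v e ==> ~~ b then 1 else 0) e (h e)))).
  congr (_ * _); rewrite Rsum_distrr; apply: eq_bigr => h _ /=.
  rewrite mix_isol -prod_ind; case: ifP => H.
    rewrite mix_del //; lra.
  lra.
rewrite (er_prod p (fun e b => if inc v e ==> ~~ b then 1 else 0)).
have -> : \big[Rmult/1]_(e : upair n)
   (p * (if inc v e ==> ~~ true then 1 else 0) + (1 - p) * (if inc v e ==> ~~ false then 1 else 0))
   = \big[Rmult/1]_(e : upair n) (if inc v e then 1 - p else 1).
  by apply: eq_bigr => e _; case: (inc v e) => /=; lra.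
rewrite prod_cond.
have -> : #|inc v| = #|incs v| by rewrite cardsE.
rewrite card_incs; ring.
Qed.

Lemma sum_constR (I : finType) (c : R) : \big[Rplus/0]_(i : I) c = INR #|I| * c.
Proof.
rewrite big_const; elim: #|I| => [|k IH]; first by rewrite /=; lra.
rewrite S_INR /= IH; lra.
Qed.

Lemma ER_EV_E n p (f : graph n -> 'I_n -> R) :
  ER_EV p f = / INR n * \big[Rplus/0]_(v : 'I_n) \big[Rplus/0]_(g : graph n) (er_prob p g * f g v).
Proof.
rewrite /ER_EV Rsum_distrr; apply: eq_bigr => v _; rewrite Rsum_distrr; apply: eq_bigr => g _.
rewrite /=; ring.
Qed.


Lemma sizebias n p (F : graph n -> R) : (0 < n)%N ->
  \big[Rplus/0]_(g : graph n) (er_prob p g * (INR (nisol g) * F g)) =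
  ER_E p (fun g : graph n => INR (nisol g)) * ER_EV p (fun g v => F (delete_at g v)).
Proof.
move=> n0.
have L : forall G : graph n -> R,
  \big[Rplus/0]_(g : graph n) (er_prob p g * (INR (nisol g) * G g)) =
  \big[Rplus/0]_(v : 'I_n) ((1 - p) ^ (n - 1) *
     \big[Rplus/0]_(g : graph n) (er_prob p g * G (delete_at g v))).
  move=> G.
  transitivity (\big[Rplus/0]_(g : graph n) \big[Rplus/0]_(v : 'I_n)
      (er_prob p g * (if isolated g v then G g else 0))).
    apply: eq_bigr => g _; rewrite nisolE Rsum_distrl Rsum_distrr; apply: eq_bigr => v _.
    case: (isolated g v); lra.
  rewrite exchange_big; apply: eq_bigr => v _; exact: sb_v.
have Hmu : ER_E p (fun g : graph n => INR (nisol g)) = INR n * (1 - p) ^ (n - 1).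
  rewrite /ER_E.
  transitivity (\big[Rplus/0]_(g : graph n) (er_prob p g * (INR (nisol g) * 1))).
    by apply: eq_bigr => g _; rewrite Rmult_1_r.
  rewrite L.
  under eq_bigr do rewrite (eq_bigr (fun g => er_prob p g) (fun g _ => Rmult_1_r _)) er_total.
  by rewrite sum_constR card_ord Rmult_1_r.
rewrite L Hmu ER_EV_E Rsum_distrr.
have nn : INR n <> 0 by apply: not_0_INR; lia.
rewrite Rsum_distrr; apply: eq_bigr => v _.
field; exact nn.
Qed.
Close Scope R_scope.

Definition TT n (v : 'I_n) (g : graph n) : {set upair n} :=
  [set e | inc v e & isolated (delete_at g v) (other v e)].

Lemma TTa n (v : 'I_n) (g : graph n) : (nisol (delete_at g v) <= 1 + #|TT v g|)%N.
Proof.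
rewrite /nisol.
have S : [set i | isolated (delete_at g v) i] \subset v |: (other v @: TT v g).
  apply/subsetP => i; rewrite !inE => Hi.
  case: (eqVneq i v) => [_|iv] //=.
  have [e /andP [he /eqP oe]] := other_surj iv.
  apply/imsetP; exists e => //.
  by rewrite inE he oe Hi.
apply: (leq_trans (subset_leq_card S)).
rewrite cardsU1; apply: leq_add; first by case: (v \notin _).
exact: leq_imset_card.
Qed.

Lemma TTb n (v : 'I_n) (g : graph n) : (#|TT v g| <= n - 1)%N.
Proof.
rewrite -(card_incs v); apply: subset_leq_card; apply/subsetP => e.
by rewrite !inE => /andP [].
Qed.

Lemma TTc n (v : 'I_n) (g h : graph n) :
  (#|[set e in TT v g | ~~ h e]| <= nisol (mix v g h))%N.
Proof.
rewrite /nisol.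
rewrite -(@card_in_imset _ _ (other v)); last first.
  move=> e1 e2; rewrite !inE => /andP [/andP [h1 _] _] /andP [/andP [h2 _] _].
  exact: other_inj.
apply: subset_leq_card; apply/subsetP => u /imsetP [e].
rewrite !inE => /andP [/andP [he Hiso] nh] ->.
rewrite isolatedE; apply/forallP => e'; apply/implyP => hu.
rewrite ffunE; case: (boolP (inc v e')) => hv.
  have E : other v e' = other v e.
    by apply: other_uniq => //; apply: other_neq.
  by rewrite (other_inj hv he E).
move: Hiso; rewrite isolatedE => /forallP /(_ e') /implyP /(_ hu).
by rewrite deleteE hv andbT.
Qed.

Definition SS n (v : 'I_n) (g : graph n) : {set 'I_n} :=
  [set u | [&& isolated (delete_at g v) u, ~~ isolated g u & u != v]].

Lemma SSa n (v : 'I_n) (g : graph n) :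
  (nisol (delete_at g v) <= nisol g + 1 + #|SS v g|)%N.
Proof.
rewrite /nisol.
have S : [set i | isolated (delete_at g v) i] \subset
   [set i | isolated g i] :|: (v |: SS v g).
  apply/subsetP => i; rewrite !inE => Hi.
  case: (boolP (isolated g i)) => //= ni.
  case: (eqVneq i v) => //= iv; by rewrite Hi.
apply: (leq_trans (subset_leq_card S)).
rewrite cardsU -addnA; apply: leq_trans (leq_subr _ _) _.
rewrite leq_add2l cardsU1; apply: leq_add => //; by case: (v \notin _).
Qed.

Lemma SSb n (g : graph n) : (\sum_(v : 'I_n) #|SS v g| <= n)%N.
Proof.
have E : forall v : 'I_n, #|SS v g| = \sum_(u : 'I_n) (u \in SS v g).
  move=> v; rewrite -sum1_card big_mkcond /=; apply: eq_bigr => u _.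
  by case: (u \in SS v g).
under eq_bigr do rewrite E.
rewrite exchange_big /=.
apply: (@leq_trans (\sum_(u : 'I_n) 1)); last first.
  by rewrite sum1_card card_ord.
apply: leq_sum => u _.
have -> : \sum_(v : 'I_n) (u \in SS v g) = #|[set v | u \in SS v g]|.
  rewrite -sum1dep_card [RHS]big_mkcond /=; apply: eq_bigr => v _.
  by case: (u \in SS v g).
apply/card_le1_eqP => x y; rewrite !inE.
move=> /and3P [hx nu ux] /and3P [hy _ uy].
move: nu; rewrite isolatedE => /forallPn [e]; rewrite negb_imply negbK => /andP [hu ge].
have F : forall z, isolated (delete_at g z) u -> u != z -> other u e = z.
  move=> z; rewrite isolatedE => /forallP /(_ e) /implyP /(_ hu).
  rewrite deleteE ge /= negbK => hz uz.
  by apply: other_uniq => //; rewrite eq_sym.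
by rewrite -(F x hx ux) -(F y hy uy).
Qed.
Open Scope R_scope.
Module Calc.
From Coquelicot Require Import Coquelicot.

Definition rr (p t : R) := p * exp t + 1 - p.
Definition ff (p : R) (K : nat) (t : R) := exp t * rr p t ^ (S K).
Definition F1 (p : R) (K : nat) (t : R) :=
  exp t * rr p t ^ (S K) + (INR K + 1) * p * (exp t * exp t) * rr p t ^ K.
Definition F2 (p : R) (K : nat) (t : R) :=
  exp t * rr p t ^ (S K) + 3 * (INR K + 1) * p * (exp t * exp t) * rr p t ^ K
  + (INR K + 1) * INR K * (p * p) * (exp t * exp t * exp t) * rr p t ^ (Nat.pred K).

Ltac fixinr K := repeat match goal with
  | |- context [match K with 0%nat => 1 | S _ => INR K + 1 end] =>
     change (match K with 0%nat => 1 | S _ => INR K + 1 end) with (INR (S K)); rewrite S_INR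
  end.

Lemma dff p K t : derivable_pt_lim (ff p K) t (F1 p K t).
Proof.
apply is_derive_Reals; unfold ff, F1, rr.
auto_derive; auto. fixinr K. simpl. unfold Rminus. ring.
Qed.

Lemma dF1 p K t : derivable_pt_lim (F1 p K) t (F2 p K t).
Proof.
apply is_derive_Reals; unfold F1, F2, rr.
auto_derive; auto. fixinr K. simpl.
unfold Rminus. destruct K as [|K]; simpl; [ring|].
ring.
Qed.

Definition gg p K c0 t := 1 + t * (F1 p K t + c0) / 2 - ff p K t.

Lemma dgg p K c0 t : derivable_pt_lim (gg p K c0) t ((F1 p K t + c0) / 2 + t * F2 p K t / 2 - F1 p K t).
Proof.
apply is_derive_Reals; unfold gg, F1, F2, ff, rr.
auto_derive; auto. fixinr K. simpl. unfold Rminus. destruct K as [|K]; simpl; field.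
Qed.

Lemma mono_mul a b c d : 0 <= a <= b -> 0 <= c <= d -> 0 <= a * c <= b * d.
Proof. intros [] []; split; [apply Rmult_le_pos|apply Rmult_le_compat]; lra. Qed.

Lemma mono_pow a b k : 0 <= a <= b -> 0 <= a ^ k <= b ^ k.
Proof. intros []; split; [apply pow_le|apply pow_incr]; lra. Qed.

Lemma F2_mono p K a b : 0 <= p <= 1 -> a <= b -> F2 p K a <= F2 p K b.
Proof.
intros Hp Hab.
assert (E : 0 <= exp a <= exp b).
  split; [left; apply exp_pos|]. destruct (Rle_lt_or_eq_dec _ _ Hab) as [h|h]; [left; apply exp_increasing; lra| subst; lra].
assert (Rr : 0 <= rr p a <= rr p b).
  unfold rr; split; nra.
assert (C : forall c, 0 <= c -> 0 <= c <= c) by (intros; lra).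
assert (HK : 0 <= INR K) by apply pos_INR.
unfold F2.
apply Rplus_le_compat; [apply Rplus_le_compat|].
- apply mono_mul; auto. apply mono_pow; auto.
- apply mono_mul; [|apply mono_pow; auto].
  apply mono_mul; [|apply mono_mul; auto].
  apply mono_mul; [|apply C; lra]. apply mono_mul; apply C; lra.
- apply mono_mul; [|apply mono_pow; auto].
  apply mono_mul; [|apply mono_mul; [apply mono_mul|]; auto].
  apply mono_mul; [|apply C; nra]. apply mono_mul; apply C; lra.
Qed.

Lemma ff0 p K : ff p K 0 = 1.
Proof. unfold ff, rr; rewrite exp_0; replace (p * 1 + 1 - p) with 1 by ring; rewrite pow1; ring. Qed.

Lemma key p K th : 0 <= p <= 1 -> 0 <= th ->
  ff p K th <= 1 + th * (F1 p K th + F1 p K 0) / 2.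
Proof.
intros Hp Ht.
destruct (Rle_lt_or_eq_dec _ _ Ht) as [Hpos|E]; [|subst; rewrite ff0; lra].
destruct (MVT_cor2 (gg p K (F1 p K 0)) _ 0 th Hpos (fun c _ => dgg p K (F1 p K 0) c))
  as [c [Hc1 Hc2]].
assert (G0 : gg p K (F1 p K 0) 0 = 0) by (unfold gg; rewrite ff0; lra).
destruct (MVT_cor2 (F1 p K) (F2 p K) 0 c (proj1 Hc2) (fun d _ => dF1 p K d))
  as [d [Hd1 Hd2]].
assert (M : F2 p K d <= F2 p K c) by (apply F2_mono; lra).
assert (P1 : 0 <= c * (F2 p K c - F2 p K d)) by (apply Rmult_le_pos; lra).
assert (P2 : 0 <= (F1 p K c + F1 p K 0) / 2 + c * F2 p K c / 2 - F1 p K c) by nra.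
assert (0 <= gg p K (F1 p K 0) th) by nra.
unfold gg in *; lra.
Qed.

Lemma dterm a c x : derivable_pt_lim (fun y => a * exp (y * c)) x (a * (c * exp (x * c))).
Proof. apply is_derive_Reals. auto_derive; auto. ring. Qed.
End Calc.
Import Calc.
Lemma testmc (I : finType) (c : R) : \big[Rplus/0]_(i : I) c = INR #|I| * c.
Proof. exact: sum_constR. Qed.
Check ff. Check key.

Lemma exp_le a b : a <= b -> exp a <= exp b.
Proof. move=> h; case: (Rle_lt_or_eq_dec _ _ h) => [h'|->]; last lra.
by left; apply: exp_increasing. Qed.

Lemma exp_pow th k : exp (th * INR k) = exp th ^ k.
Proof.
elim: k => [|k IH]; first by rewrite /= Rmult_0_r exp_0.
rewrite S_INR Rmult_plus_distr_l Rmult_1_r exp_plus IH /=; ring.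
Qed.

Lemma pos_g n p (v : 'I_n) (g : graph n) th : (2 <= n)%N -> 0 <= p <= 1 -> 0 <= th ->
  exp (th * INR (nisol (delete_at g v))) <=
  ff p (n - 2) th * \big[Rplus/0]_(h : graph n) (er_prob p h * exp (th * INR (nisol (mix v g h)))).
Proof.
move=> n2 Hp Ht.
set E := exp th.
have E1 : 1 <= E by rewrite /E -exp_0; apply: exp_le.
set k := #|TT v g|.
have L1 : exp (th * INR (nisol (delete_at g v))) <= E * E ^ k.
  rewrite -exp_pow -exp_plus; apply: exp_le.
  have := le_INR _ _ (leP (TTa v g)); rewrite plus_INR /= -/k => h.
  have : th * INR (nisol (delete_at g v)) <= th * (1 + INR k) by apply: Rmult_le_compat_l.
  lra.
pose psi := fun (e : upair n) (b : bool) => if (e \in TT v g) && ~~ b then E else 1.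
have L2 : \big[Rplus/0]_(h : graph n) (er_prob p h * \big[Rmult/1]_e psi e (h e)) <=
    \big[Rplus/0]_(h : graph n) (er_prob p h * exp (th * INR (nisol (mix v g h)))).
  apply: Rsum_le => h; apply: Rmult_le_compat_l; first exact: er_ge0.
  have -> : \big[Rmult/1]_e psi e (h e) = E ^ #|[pred e | (e \in TT v g) && ~~ h e]|.
    by rewrite -prod_cond.
  rewrite /E -exp_pow; apply: exp_le; apply: Rmult_le_compat_l => //.
  apply: le_INR; apply/leP; apply: leq_trans (TTc v g h).
  by rewrite cardsE.
rewrite (er_prod p psi) in L2.
have EQ : \big[Rmult/1]_(e : upair n) (p * psi e true + (1 - p) * psi e false) =
   (p + (1 - p) * E) ^ k.
  transitivity (\big[Rmult/1]_(e : upair n) (if e \in TT v g then p + (1 - p) * E else 1)).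
    by apply: eq_bigr => e _; rewrite /psi andbF andbT; case: (e \in TT v g); lra.
  rewrite -big_mkcond big_const /k; elim: #|TT v g| => [|j IH] /=; first lra.
  by rewrite IH.
rewrite EQ in L2.
set q := p + (1 - p) * E.
set r := rr p th.
have q1 : 1 <= q by rewrite /q; nra.
have r1 : 1 <= r by rewrite /r /rr -/E; nra.
have Erq : E <= r * q.
  have : r * q - E = p * (1 - p) * ((E - 1) * (E - 1)) by rewrite /r /q /rr -/E; ring.
  have : 0 <= p * (1 - p) * ((E - 1) * (E - 1)).
    apply: Rmult_le_pos; [apply: Rmult_le_pos|apply: Rle_0_sqr]; lra.
  lra.
have L3 : E * E ^ k <= ff p (n - 2) th * q ^ k.
  rewrite /ff -/E -/r Rmult_assoc; apply: Rmult_le_compat_l; first lra.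
  apply: (Rle_trans _ ((r * q) ^ k)); first by apply: pow_incr; lra.
  rewrite Rpow_mult_distr; apply: Rmult_le_compat_r; first by apply: pow_le; lra.
  apply: Rle_pow => //; apply/leP.
  by apply: leq_trans (TTb v g) _; lia.
have F0 : 0 <= ff p (n - 2) th.
  rewrite /ff -/E -/r; apply: Rmult_le_pos; [lra|apply: pow_le; lra].
apply: (Rle_trans _ _ _ L1); apply: (Rle_trans _ _ _ L3).
by apply: Rmult_le_compat_l.
Qed.

Lemma neg_g n (g : graph n) th : th < 0 ->
  \big[Rplus/0]_(v : 'I_n) (exp (th * INR (nisol g)) - exp (th * INR (nisol (delete_at g v))))
  <= 2 * INR n * (- th) * exp (th * INR (nisol g)).
Proof.
move=> Ht.
set Y := INR (nisol g); set c := exp (th * Y).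
have c0 : 0 < c by apply: exp_pos.
apply: (Rle_trans _ (\big[Rplus/0]_(v : 'I_n) (c * (- th) * (1 + INR #|SS v g|)))).
  apply: Rsum_le => v.
  set Yv := INR (nisol (delete_at g v)).
  have H1 : Yv <= Y + 1 + INR #|SS v g|.
    have := le_INR _ _ (leP (SSa v g)); rewrite !plus_INR /= -/Yv -/Y; lra.
  have H2 := exp_ineq1_le (th * (Yv - Y)).
  have -> : exp (th * Yv) = c * exp (th * (Yv - Y)) by rewrite /c -exp_plus; f_equal; ring.
  have H3 : c * (1 + th * (Yv - Y)) <= c * exp (th * (Yv - Y)) by apply: Rmult_le_compat_l; lra.
  have H4 : - th * (Yv - Y) <= - th * (1 + INR #|SS v g|) by apply: Rmult_le_compat_l; lra.
  have H5 : c * (- th * (Yv - Y)) <= c * (- th * (1 + INR #|SS v g|)) by apply: Rmult_le_compat_l; lra.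
  nra.
rewrite -Rsum_distrr.
have -> : \big[Rplus/0]_(v : 'I_n) (1 + INR #|SS v g|) = INR n + INR (\sum_(v : 'I_n) #|SS v g|)%N.
  by rewrite big_split /= INR_sum sum_constR card_ord Rmult_1_r.
have := le_INR _ _ (leP (SSb g)) => H.
have : 0 <= c * - th by apply: Rmult_le_pos; lra.
nra.
Qed.

Lemma deriv_bigsum (I : finType) (F : I -> R -> R) (F' : I -> R) x :
  (forall i, derivable_pt_lim (F i) x (F' i)) ->
  derivable_pt_lim (fun y => \big[Rplus/0]_(i : I) F i y) x (\big[Rplus/0]_(i : I) F' i).
Proof.
move=> H.
suff S : forall r : seq I, derivable_pt_lim (fun y => \big[Rplus/0]_(i <- r) F i y) x
                                         (\big[Rplus/0]_(i <- r) F' i) by exact: S.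
elim => [|a r IH].
  have -> : (fun y => \big[Rplus/0]_(i <- [::]) F i y) = fct_cte 0.
    by apply: FunctionalExtensionality.functional_extensionality => y; rewrite big_nil.
  rewrite big_nil; exact: derivable_pt_lim_const.
have -> : (fun y => \big[Rplus/0]_(i <- a :: r) F i y) =
          plus_fct (F a) (fun y => \big[Rplus/0]_(i <- r) F i y).
  by apply: FunctionalExtensionality.functional_extensionality => y; rewrite big_cons.
rewrite big_cons; exact: derivable_pt_lim_plus.
Qed.

Lemma derivM n p th :
  derivable_pt_lim (mgfY n p) th
    (\big[Rplus/0]_(g : graph n) (er_prob p g * (INR (nisol g) * exp (th * INR (nisol g))))).
Proof.
rewrite /mgfY /ER_E; apply: (@deriv_bigsum _ (fun g y => er_prob p g * exp (y * INR (nisol g)))) => g.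
exact: dterm.
Qed.

Lemma gamma_eq n p th : (2 <= n)%N ->
  F1 p (n - 2) th + F1 p (n - 2) 0 = gamma_theta n p th.
Proof.
move=> n2; have [K ->] : exists K, n = K.+2 by exists (n - 2)%N; lia.
have E2 : (K.+2 - 2 = K)%N by lia.
have E1 : (K.+2 - 1 = K.+1)%N by lia.
rewrite /F1 /gamma_theta ?E2 ?E1 /rr !S_INR exp_0 /=.
replace (p * 1 + 1 - p) with 1 by ring; rewrite pow1; ring.
Qed.

Lemma ER_EV_sub n p (a : graph n -> 'I_n -> R) (b : graph n -> R) : (0 < n)%N ->
  ER_EV p (fun g v => a g v - b g) = ER_EV p a - ER_E p b.
Proof.
move=> n0; rewrite !ER_EV_E /ER_E.
have nn : INR n <> 0 by apply: not_0_INR; lia.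
have -> : \big[Rplus/0]_(v : 'I_n) \big[Rplus/0]_(g : graph n) (er_prob p g * (a g v - b g)) =
  \big[Rplus/0]_(v : 'I_n) \big[Rplus/0]_(g : graph n) (er_prob p g * a g v) -
  INR n * \big[Rplus/0]_(g : graph n) (er_prob p g * b g).
  rewrite [INR n](_ : _ = INR #|'I_n|); last by rewrite card_ord.
  rewrite -sum_constR.
  have E : forall (I : finType) (f h : I -> R),
      \big[Rplus/0]_(i : I) (f i - h i) = \big[Rplus/0]_(i : I) f i - \big[Rplus/0]_(i : I) h i.
    move=> I f h; rewrite /Rminus (big_morph Ropp (fun x y => Ropp_plus_distr x y) Ropp_0).
    by rewrite -big_split /=; apply: eq_bigr => i _.
  rewrite -E; apply: eq_bigr => v _; rewrite -E; apply: eq_bigr => g _; ring.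
field; exact nn.
Qed.

Lemma ER_E_ge0 n p (f : graph n -> R) : 0 <= p <= 1 -> (forall g, 0 <= f g) -> 0 <= ER_E p f.
Proof. move=> Hp H; apply: Rsum_ge0 => g; apply: Rmult_le_pos; [exact: er_ge0|exact: H]. Qed.

Lemma A_pos n p th : (2 <= n)%N -> 0 <= p <= 1 -> 0 <= th ->
  ER_EV p (fun (g : graph n) v => exp (th * INR (nisol (delete_at g v))))
  <= ff p (n - 2) th * mgfY n p th.
Proof.
move=> n2 Hp Ht.
have nn : 0 < INR n by apply: lt_0_INR; lia.
rewrite ER_EV_E.
have H : forall v : 'I_n,
  \big[Rplus/0]_(g : graph n) (er_prob p g * exp (th * INR (nisol (delete_at g v))))
  <= ff p (n - 2) th * mgfY n p th.
  move=> v; rewrite /mgfY /ER_E [X in _ <= _ * X](resample p v) Rsum_distrr.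
  apply: Rsum_le => g.
  have H1 := pos_g v g n2 Hp Ht; have H2 := er_ge0 g Hp.
  set S := \big[Rplus/0]_(h : graph n) _ in H1 *.
  have := Rmult_le_compat_l _ _ _ H2 H1; lra.
apply: (Rle_trans _ (/ INR n * \big[Rplus/0]_(v : 'I_n) (ff p (n - 2) th * mgfY n p th))).
  apply: Rmult_le_compat_l; first by left; apply: Rinv_0_lt_compat.
  exact: Rsum_le.
rewrite sum_constR card_ord; right; field; lra.
Qed.

Lemma B_neg n p th : (0 < n)%N -> 0 <= p <= 1 -> th < 0 ->
  ER_EV p (fun (g : graph n) v => exp (th * INR (nisol g)) - exp (th * INR (nisol (delete_at g v))))
  <= 2 * Rabs th * mgfY n p th.
Proof.
move=> n0 Hp Ht.
have nn : 0 < INR n by apply: lt_0_INR; lia.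
rewrite ER_EV_E exchange_big /=.
apply: (Rle_trans _ (/ INR n * \big[Rplus/0]_(g : graph n)
          (er_prob p g * (2 * INR n * (- th) * exp (th * INR (nisol g)))))).
  apply: Rmult_le_compat_l; first by left; apply: Rinv_0_lt_compat.
  apply: Rsum_le => g; rewrite -Rsum_distrr; apply: Rmult_le_compat_l; first exact: er_ge0.
  exact: neg_g.
rewrite Rsum_distrr /mgfY /ER_E Rsum_distrr Rabs_left //; right.
apply: eq_bigr => g _; field; lra.
Qed.

Theorem mainTheorem6 (n : nat) (p : R) :
  (2 <= n)%nat -> 0 < p < 1 ->
  let M := mgfY n p in
  let mu := ER_E p (fun g : graph n => INR (nisol g)) in
  (forall theta : R, 0 <= theta ->
     ER_EV p (fun (g : graph n) (v : 'I_n) => exp (theta * INR (nisol (delete_at g v)))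
                         - exp (theta * INR (nisol g)))
       <= theta * gamma_theta n p theta / 2 * M theta
     /\ exists l : R, derivable_pt_lim M theta l /\
          l <= mu * (1 + theta * gamma_theta n p theta / 2) * M theta) /\
  (forall theta : R, theta < 0 ->
     ER_EV p (fun (g : graph n) (v : 'I_n) => exp (theta * INR (nisol g))
                         - exp (theta * INR (nisol (delete_at g v))))
       <= 2 * Rabs theta * M theta
     /\ exists l : R, derivable_pt_lim M theta l /\
          l >= mu * (1 + 2 * theta) * M theta).
Proof.
move=> n2' Hp' M mu.
have n2 : (2 <= n)%N := n2'.
have n0 : (0 < n)%N by lia.
have Hp : 0 <= p <= 1 by lra.
have mu0 : 0 <= mu by apply: ER_E_ge0 => // g; apply: pos_INR.
have M0 : forall th, 0 <= M th by move=> th; apply: ER_E_ge0 => // g; left; apply: exp_pos.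
have SB : forall th,
  \big[Rplus/0]_(g : graph n) (er_prob p g * (INR (nisol g) * exp (th * INR (nisol g)))) =
  mu * ER_EV p (fun (g : graph n) v => exp (th * INR (nisol (delete_at g v)))).
  move=> th; exact: (sizebias p (fun g => exp (th * INR (nisol g)))).
have EV1 : forall th, ER_EV p (fun (g : graph n) v => exp (th * INR (nisol (delete_at g v)))
                         - exp (th * INR (nisol g))) =
   ER_EV p (fun (g : graph n) v => exp (th * INR (nisol (delete_at g v)))) - M th.
  move=> th; exact: (ER_EV_sub p (fun g v => exp (th * INR (nisol (delete_at g v))))
                               (fun g => exp (th * INR (nisol g))) n0).
split.
- move=> th Ht.
  have KEY := key (n - 2) Hp Ht; rewrite gamma_eq // in KEY.
  have AP := A_pos n2 Hp Ht; rewrite -/M in AP.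
  have Mth := M0 th.
  split.
    rewrite EV1.
    have : (ff p (n - 2) th - 1) * M th <= th * gamma_theta n p th / 2 * M th.
      apply: Rmult_le_compat_r => //; lra.
    nra.
  exists (\big[Rplus/0]_(g : graph n) (er_prob p g * (INR (nisol g) * exp (th * INR (nisol g))))).
  split; first exact: derivM.
  rewrite SB Rmult_assoc; apply: Rmult_le_compat_l => //.
  apply: (Rle_trans _ _ _ AP); apply: Rmult_le_compat_r => //.
- move=> th Ht.
  have BN := B_neg n0 Hp Ht; rewrite -/M in BN.
  have Mth := M0 th.
  split => //.
  exists (\big[Rplus/0]_(g : graph n) (er_prob p g * (INR (nisol g) * exp (th * INR (nisol g))))).
  split; first exact: derivM.
  rewrite SB.
  have EV2 : ER_EV p (fun (g : graph n) v => exp (th * INR (nisol g))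
                         - exp (th * INR (nisol (delete_at g v)))) =
       M th - ER_EV p (fun (g : graph n) v => exp (th * INR (nisol (delete_at g v)))).
    have := EV1 th.
    have -> : ER_EV p (fun (g : graph n) v => exp (th * INR (nisol g))
                         - exp (th * INR (nisol (delete_at g v)))) =
       - ER_EV p (fun (g : graph n) v => exp (th * INR (nisol (delete_at g v)))
                         - exp (th * INR (nisol g))).
      rewrite /ER_EV (big_morph Ropp (fun x y => Ropp_plus_distr x y) Ropp_0).
      apply: eq_bigr => v _; rewrite (big_morph Ropp (fun x y => Ropp_plus_distr x y) Ropp_0).
      apply: eq_bigr => g _; ring.
    lra.
  rewrite EV2 Rabs_left // in BN.
  rewrite Rmult_assoc; apply: Rle_ge; apply: Rmult_le_compat_l => //.
  lra.
Qed.
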